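(* Let $r\ge2$, $\ell\ge2$. There is a ring isomorphism $\rho:\widehat{\mathcal{T}}_{2\ell}(A_{2r+1})\to\widetilde{\mathcal{T}}_\ell(C_r)$ determined by (for $u\in\frac12\mathbb{Z}$): $S^{(a)}_m(u)\mapsto T^{(a)}_m(u)$ ($1\le a\le r-1$, $1\le m\le 2\ell-1$); $S^{(r)}_{2m}(u)\mapsto T^{(r)}_m(u-\frac12)T^{(r)}_m(u+\frac12)$ ($1\le m\le\ell-1$); $S^{(r)}_{2m+1}(u)\mapsto T^{(r)}_m(u)T^{(r)}_{m+1}(u)$ ($0\le m\le\ell-1$); $S^{(r+1)}_{2m}(u)\mapsto T^{(r)}_m(u)^2$ ($1\le m\le\ell-1$); and $\rho(S^{(a)}_m(u))=(-1)^m\rho(S^{(2r+2-a)}_m(u))$ for $r+2\le a\le 2r+1$; here $T^{(r)}_0(u)=1$.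
   Context: $\widetilde{\mathcal{T}}_\ell(C_r)$ is the commutative ring with generators $T^{(a)}_m(u)^{\pm1}$ ($1\le a\le r-1$, $1\le m\le 2\ell-1$; $a=r$, $1\le m\le\ell-1$; $u\in\frac12\mathbb{Z}$) and $T^{(r)}_\ell(u)$ ($u\in\frac12\mathbb{Z}$), with relations, for all $u$: $T^{(a)}_m(u-\frac12)T^{(a)}_m(u+\frac12)=T^{(a)}_{m-1}(u)T^{(a)}_{m+1}(u)+T^{(a-1)}_m(u)T^{(a+1)}_m(u)$ ($1\le a\le r-2$, $1\le m\le2\ell-1$); $T^{(r-1)}_{2m}(u-\frac12)T^{(r-1)}_{2m}(u+\frac12)=T^{(r-1)}_{2m-1}(u)T^{(r-1)}_{2m+1}(u)+T^{(r-2)}_{2m}(u)T^{(r)}_m(u-\frac12)T^{(r)}_m(u+\frac12)$ ($1\le m\le\ell-1$); $T^{(r-1)}_{2m+1}(u-\frac12)T^{(r-1)}_{2m+1}(u+\frac12)=T^{(r-1)}_{2m}(u)T^{(r-1)}_{2m+2}(u)+T^{(r-2)}_{2m+1}(u)T^{(r)}_m(u)T^{(r)}_{m+1}(u)$ ($0\le m\le\ell-1$); $T^{(r)}_m(u-1)T^{(r)}_m(u+1)=T^{(r)}_{m-1}(u)T^{(r)}_{m+1}(u)+T^{(r-1)}_{2m}(u)$ ($1\le m\le\ell-1$); with $T^{(0)}_m=T^{(a)}_0=1$, $T^{(a)}_{2\ell}=1$ ($a\le r-1$) on right sides, and $T^{(r)}_\ell(u)^2=1$, $T^{(r)}_\ell(u+1)=T^{(r)}_\ell(u)$.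 $\widehat{\mathcal{T}}_{2\ell}(A_{2r+1})$ is the commutative ring with generators $S^{(a)}_m(u)^{\pm1}$ ($1\le a\le2r+1$, $1\le m\le2\ell-1$, $u\in\frac12\mathbb{Z}$, excluding $a=r+1$ with $m$ odd), where one sets $S^{(r+1)}_m(u)=0$ for odd $m$, with relations: $S^{(a)}_m(u-\frac12)S^{(a)}_m(u+\frac12)=S^{(a)}_{m-1}(u)S^{(a)}_{m+1}(u)+S^{(a-1)}_m(u)S^{(a+1)}_m(u)$ for all $1\le a\le2r+1$, $1\le m\le2\ell-1$, $u\in\frac12\mathbb{Z}$; $S^{(a)}_m(u)=(-1)^mS^{(2r+2-a)}_m(u)$; and on right sides $S^{(a)}_0(u)=S^{(a)}_{2\ell}(u)=S^{(0)}_m(u)=1$, $S^{(2r+2)}_m(u)=(-1)^m$. *)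

(* Defs.v *)
From HB Require Import structures.
From mathcomp Require Import all_boot all_order all_algebra.
Set Implicit Arguments. Unset Strict Implicit. Unset Printing Implicit Defensive.
Import Order.TTheory GRing.Theory Num.Theory.
Local Open Scope ring_scope.

(* Spectral parameters u in (1/2)Z are encoded by k : int with u = k/2.
   So u -+ 1/2 is k -+ 1 and u -+ 1 is k -+ 2.
   Families are functions  X : nat (a) -> nat (m) -> int (k) -> R. *)

Definition Tgen (r l a m : nat) : bool :=
  ((1 <= a <= r.-1) && (1 <= m <= (2 * l).-1))%N || ((a == r) && (1 <= m <= l)%N).

Definition Tsys (r l : nat) (R : comUnitRingType) (T : nat -> nat -> int -> R) : Prop :=
  (forall m k, T 0%N m k = 1) /\
  (forall a k, (1 <= a <= r)%N -> T a 0%N k = 1) /\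
  (forall a k, (1 <= a <= r.-1)%N -> T a (2 * l)%N k = 1) /\
  (forall a m k, (1 <= a <= r.-1)%N -> (1 <= m <= (2 * l).-1)%N -> T a m k \is a GRing.unit) /\
  (forall m k, (1 <= m <= l.-1)%N -> T r m k \is a GRing.unit) /\
  (forall k, T r l k ^+ 2 = 1) /\
  (forall k, T r l (k + 2) = T r l k) /\
  (forall a m k, (1 <= a <= r - 2)%N -> (1 <= m <= (2 * l).-1)%N ->
     T a m (k - 1) * T a m (k + 1) =
     T a m.-1 k * T a m.+1 k + T a.-1 m k * T a.+1 m k) /\
  (forall m k, (1 <= m <= l.-1)%N ->
     T r.-1 (2 * m)%N (k - 1) * T r.-1 (2 * m)%N (k + 1) =
     T r.-1 (2 * m).-1 k * T r.-1 (2 * m).+1 k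
     + T (r - 2)%N (2 * m)%N k * T r m (k - 1) * T r m (k + 1)) /\
  (forall m k, (m <= l.-1)%N ->
     T r.-1 (2 * m).+1 (k - 1) * T r.-1 (2 * m).+1 (k + 1) =
     T r.-1 (2 * m)%N k * T r.-1 (2 * m).+2 k
     + T (r - 2)%N (2 * m).+1 k * T r m k * T r m.+1 k) /\
  (forall m k, (1 <= m <= l.-1)%N ->
     T r m (k - 2) * T r m (k + 2) = T r m.-1 k * T r m.+1 k + T r.-1 (2 * m)%N k).

Definition is_Tring (r l : nat) (A : comUnitRingType) (t : nat -> nat -> int -> A) : Prop :=
  Tsys r l t /\
  forall (R : comUnitRingType) (x : nat -> nat -> int -> R), Tsys r l x ->
    exists f : {rmorphism A -> R},
      (forall a m k, Tgen r l a m -> f (t a m k) = x a m k) /\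
      (forall g : {rmorphism A -> R},
         (forall a m k, Tgen r l a m -> g (t a m k) = x a m k) -> g =1 f).

Definition Sgen (r l a m : nat) : bool :=
  ((1 <= a <= (2 * r).+1) && (1 <= m <= (2 * l).-1))%N && ~~ ((a == r.+1) && odd m).

Definition Ssys (r l : nat) (R : comUnitRingType) (S : nat -> nat -> int -> R) : Prop :=
  (forall m k, S 0%N m k = 1) /\
  (forall m k, S (2 * r + 2)%N m k = (-1) ^+ m) /\
  (forall a k, (1 <= a <= (2 * r).+1)%N -> S a 0%N k = 1) /\
  (forall a k, (1 <= a <= (2 * r).+1)%N -> S a (2 * l)%N k = 1) /\
  (forall m k, (1 <= m <= (2 * l).-1)%N -> odd m -> S r.+1 m k = 0) /\
  (forall a m k, Sgen r l a m -> S a m k \is a GRing.unit) /\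
  (forall a m k, (1 <= a <= (2 * r).+1)%N -> (1 <= m <= (2 * l).-1)%N ->
     S a m (k - 1) * S a m (k + 1) =
     S a m.-1 k * S a m.+1 k + S a.-1 m k * S a.+1 m k) /\
  (forall a m k, (1 <= a <= (2 * r).+1)%N -> (1 <= m <= (2 * l).-1)%N ->
     S a m k = (-1) ^+ m * S (2 * r + 2 - a)%N m k).

Definition is_Sring (r l : nat) (A : comUnitRingType) (s : nat -> nat -> int -> A) : Prop :=
  Ssys r l s /\
  forall (R : comUnitRingType) (x : nat -> nat -> int -> R), Ssys r l x ->
    exists f : {rmorphism A -> R},
      (forall a m k, Sgen r l a m -> f (s a m k) = x a m k) /\
      (forall g : {rmorphism A -> R},
         (forall a m k, Sgen r l a m -> g (s a m k) = x a m k) -> g =1 f).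

(* Main.v *)
Require Import Defs.
From HB Require Import structures.
From mathcomp Require Import all_boot all_order all_algebra.
From mathcomp Require Import zify ring.
Import GRing.Theory.
Local Open Scope ring_scope.

Lemma lincomb {R : comUnitRingType} {A B : R} (c : R) {p q : R} :
  p = q -> A - B = c * (p - q) -> A = B.
Proof. by move=> -> h; apply/eqP; rewrite -subr_eq0 h subrr mulr0. Qed.

Lemma par m : exists m', m = (2 * m')%N \/ m = (2 * m')%N.+1.
Proof.
exists m./2; rewrite mul2n; move: (odd_double_half m).
by case: (odd m) => /= e; [right|left]; rewrite -[in LHS]e.
Qed.

Lemma odd2 m : odd (2 * m)%N = false. Proof. by rewrite mul2n odd_double. Qed.
Lemma half2 m : (2 * m)%N./2 = m. Proof. by rewrite mul2n doubleK. Qed.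
Lemma odd2S m : odd (2 * m)%N.+1 = true. Proof. by rewrite /= odd2. Qed.
Lemma half2S m : (2 * m)%N.+1./2 = m.
Proof. by rewrite mul2n; exact: (half_bit_double m true). Qed.

Lemma sgn_even (R : comUnitRingType) m : (-1) ^+ (2 * m)%N = 1 :> R.
Proof. by rewrite -signr_odd odd2. Qed.
Lemma sgn_odd (R : comUnitRingType) m : (-1) ^+ (2 * m)%N.+1 = -1 :> R.
Proof. by rewrite -signr_odd odd2S expr1. Qed.
Lemma sgn_sq (R : comUnitRingType) m : (-1) ^+ m * (-1) ^+ m = 1 :> R.
Proof. by rewrite -exprD -signr_odd addnn odd_double. Qed.
Lemma sgn_unit (R : comUnitRingType) m : (-1) ^+ m \is a @GRing.unit R.
Proof. by apply: unitrX; rewrite unitrN unitr1. Qed.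

Lemma unit_sq (R : comUnitRingType) (x : R) : x ^+ 2 = 1 -> x \is a GRing.unit.
Proof. by move=> h; apply/unitrP; exists x; rewrite -expr2 h. Qed.

Definition Rel {R : comUnitRingType} (X : nat -> nat -> int -> R) a m k :=
  X a m (k - 1) * X a m (k + 1) = X a m.-1 k * X a m.+1 k + X a.-1 m k * X a.+1 m k.

Lemma mirror (r : nat) (R : comUnitRingType) (X : nat -> nat -> int -> R) a m (k : int) :
  (forall b m k, (b <= 2 * r + 2)%N -> X b m k = (-1) ^+ m * X (2 * r + 2 - b)%N m k) ->
  (1 <= a <= (2 * r)%N.+1)%N -> (1 <= m)%N ->
  Rel X a m k -> Rel X (2 * r + 2 - a)%N m k.
Proof.
move=> sym ha hm; rewrite /Rel => h.
rewrite (sym (2*r+2-a)%N m (k-1)); last lia.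
rewrite (sym (2*r+2-a)%N m (k+1)); last lia.
rewrite (sym (2*r+2-a)%N m.-1 k); last lia.
rewrite (sym (2*r+2-a)%N m.+1 k); last lia.
rewrite (sym (2*r+2-a)%N.-1 m k); last lia.
rewrite (sym (2*r+2-a)%N.+1 m k); last lia.
have -> : (2 * r + 2 - (2 * r + 2 - a)%N)%N = a by lia.
have -> : (2 * r + 2 - (2 * r + 2 - a)%N.-1)%N = a.+1 by lia.
have -> : (2 * r + 2 - (2 * r + 2 - a)%N.+1)%N = a.-1 by lia.
have h23 : (-1) ^+ m.-1 * (-1) ^+ m.+1 = 1 :> R.
  have e : (m.-1 + m.+1 = m + m)%N by lia.
  by rewrite -exprD -signr_odd e addnn odd_double.
rewrite mulrACA sgn_sq mul1r mulrACA h23 mul1r mulrACA sgn_sq mul1r.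
by rewrite h [X a.+1 m k * _]mulrC.
Qed.
Section TtoS.
Variables (r l : nat) (R : comUnitRingType) (T : nat -> nat -> int -> R).

Definition xb a m k : R :=
  if (a < r)%N then T a m k
  else if a == r then
    (if odd m then T r m./2 k * T r (m./2).+1 k else T r m./2 (k - 1) * T r m./2 (k + 1))
  else (if odd m then 0 else T r m./2 k ^+ 2).

Definition xS a m k : R :=
  if (a <= r.+1)%N then xb a m k
  else if (a <= 2 * r + 2)%N then (-1) ^+ m * xb (2 * r + 2 - a)%N m k else 1.

Lemma xS_low a m k : (a <= r.+1)%N -> xS a m k = xb a m k.
Proof. by rewrite /xS => ->. Qed.
Lemma xb_lt a m k : (a < r)%N -> xb a m k = T a m k.
Proof. by rewrite /xb => ->. Qed.
Lemma xb_re m k : xb r (2 * m)%N k = T r m (k - 1) * T r m (k + 1).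
Proof. by rewrite /xb ltnn eqxx odd2 half2. Qed.
Lemma xb_ro m k : xb r (2 * m)%N.+1 k = T r m k * T r m.+1 k.
Proof. by rewrite /xb ltnn eqxx odd2S half2S. Qed.
Lemma xb_r1e m k : xb r.+1 (2 * m)%N k = T r m k ^+ 2.
Proof. have h : (r.+1 == r) = false by lia. by rewrite /xb ltnNge leqnSn /= h odd2 half2.
Qed.
Lemma xb_r1o m k : xb r.+1 (2 * m)%N.+1 k = 0.
Proof. have h : (r.+1 == r) = false by lia. by rewrite /xb ltnNge leqnSn /= h odd2. Qed.

Hypothesis hr : (2 <= r)%N.
Hypothesis hl : (2 <= l)%N.

Lemma xS_sym b m k : (b <= 2 * r + 2)%N -> xS b m k = (-1) ^+ m * xS (2 * r + 2 - b)%N m k.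
Proof.
move=> hb; case: (leqP b r) => h1.
  have e1 : (b <= r.+1)%N by lia.
  have e2 : (2 * r + 2 - b <= r.+1)%N = false by lia.
  have e3 : (2 * r + 2 - b <= 2 * r + 2)%N by lia.
  have e4 : (2 * r + 2 - (2 * r + 2 - b)%N = b)%N by lia.
  by rewrite /xS e1 e2 e3 e4 mulrA sgn_sq mul1r.
case: (ltnP r.+1 b) => h2.
  have e1 : (b <= r.+1)%N = false by lia.
  have e2 : (2 * r + 2 - b <= r.+1)%N by lia.
  by rewrite /xS e1 hb e2.
have -> : b = r.+1 by lia.
have -> : (2 * r + 2 - r.+1)%N = r.+1 by lia.
rewrite /xS leqnn; have [m' [->|->]] := par m.
  by rewrite sgn_even mul1r.
by rewrite xb_r1o mulr0.
Qed.
Hypothesis HT : Tsys r l T.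
Lemma T0 m k : T 0 m k = 1. Proof. by case: HT. Qed.
Lemma Ta0 a k : (1 <= a <= r)%N -> T a 0 k = 1. Proof. by case: HT => _ [h _]; apply: h. Qed.
Lemma Ta2l a k : (1 <= a <= r.-1)%N -> T a (2 * l)%N k = 1.
Proof. by case: HT => _ [_ [h _]]; apply: h. Qed.
Lemma Tu a m k : (1 <= a <= r.-1)%N -> (1 <= m <= (2 * l)%N.-1)%N -> T a m k \is a GRing.unit.
Proof. by case: HT => _ [_ [_ [h _]]]; apply: h. Qed.
Lemma Tru m k : (1 <= m <= l.-1)%N -> T r m k \is a GRing.unit.
Proof. by case: HT => _ [_ [_ [_ [h _]]]]; apply: h. Qed.
Lemma Tl2 k : T r l k ^+ 2 = 1. Proof. by case: HT => _ [_ [_ [_ [_ [h _]]]]]; apply: h. Qed.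
Lemma Tlper k : T r l (k + 2) = T r l k.
Proof. by case: HT => _ [_ [_ [_ [_ [_ [h _]]]]]]; apply: h. Qed.
Lemma Trel a m k : (1 <= a <= r - 2)%N -> (1 <= m <= (2 * l)%N.-1)%N ->
     T a m (k - 1) * T a m (k + 1) = T a m.-1 k * T a m.+1 k + T a.-1 m k * T a.+1 m k.
Proof. by case: HT => _ [_ [_ [_ [_ [_ [_ [h _]]]]]]]; apply: h. Qed.
Lemma Tev m k : (1 <= m <= l.-1)%N ->
     T r.-1 (2 * m)%N (k - 1) * T r.-1 (2 * m)%N (k + 1) =
     T r.-1 (2 * m)%N.-1 k * T r.-1 (2 * m)%N.+1 k
     + T (r - 2)%N (2 * m)%N k * T r m (k - 1) * T r m (k + 1).
Proof. by case: HT => _ [_ [_ [_ [_ [_ [_ [_ [h _]]]]]]]]; apply: h. Qed.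
Lemma Tod m k : (m <= l.-1)%N ->
     T r.-1 (2 * m)%N.+1 (k - 1) * T r.-1 (2 * m)%N.+1 (k + 1) =
     T r.-1 (2 * m)%N k * T r.-1 (2 * m)%N.+2 k
     + T (r - 2)%N (2 * m)%N.+1 k * T r m k * T r m.+1 k.
Proof. by case: HT => _ [_ [_ [_ [_ [_ [_ [_ [_ [h _]]]]]]]]]; apply: h. Qed.
Lemma Trr m k : (1 <= m <= l.-1)%N ->
     T r m (k - 2) * T r m (k + 2) = T r m.-1 k * T r m.+1 k + T r.-1 (2 * m)%N k.
Proof. by case: HT => _ [_ [_ [_ [_ [_ [_ [_ [_ [_ h]]]]]]]]]; apply: h. Qed.

Lemma Tr_unit m k : (m <= l)%N -> T r m k \is a GRing.unit.
Proof.
move=> hm; case: (posnP m) => [->|m0]; first by rewrite Ta0 ?unitr1 //; lia.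
case: (ltnP m l) => h; first by apply: Tru; lia.
have -> : m = l by lia.
exact: unit_sq (Tl2 k).
Qed.

Lemma Tl_m1 k : T r l (k - 1) * T r l (k + 1) = 1.
Proof.
have -> : k + 1 = (k - 1) + 2 by lia.
by rewrite Tlper -expr2 Tl2.
Qed.

Lemma xrel_low a m k : (1 <= a <= r)%N -> (1 <= m <= (2 * l)%N.-1)%N -> Rel xS a m k.
Proof.
move=> ha hm; rewrite /Rel !xS_low; try lia.
case: (ltnP a.+1 r) => h1.
  rewrite !xb_lt; try lia.
  by apply: Trel; lia.
case: (ltnP a r) => h2.
  have ea : a = r.-1 by lia.
  have e1 : a.-1 = (r - 2)%N by lia.
  have e2 : a.+1 = r by lia.
  have xa : forall m k, xb a m k = T a m k by move=> ? ?; apply: xb_lt.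
  have xa2 : forall m k, xb (r - 2) m k = T (r - 2) m k by move=> ? ?; apply: xb_lt; lia.
  rewrite e1 e2 !xa xa2.
  rewrite ea; have [m' [em|em]] := par m; rewrite em.
    rewrite xb_re mulrA; apply: Tev; lia.
  rewrite xb_ro mulrA /=; apply: Tod; lia.
have -> : a = r by lia.
rewrite (xb_lt r.-1); last lia.
have [m' [em|em]] := par m; rewrite em.
  have e1 : (2 * m')%N.-1 = (2 * m'.-1)%N.+1 by lia.
  rewrite e1 !xb_ro !xb_re xb_r1e prednK; last lia.
  have -> : k - 1 - 1 = k - 2 by lia.
  have -> : k + 1 + 1 = k + 2 by lia.
  rewrite subrK addrK.
  have hm' : (1 <= m' <= l.-1)%N by lia.
  apply: (lincomb (T r m' k ^+ 2) (Trr m' k hm')).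
  by ring.
have e1 : (2 * m')%N.+2 = (2 * m'.+1)%N by lia.
rewrite /= e1 xb_r1o !xb_ro !xb_re.
by ring.
Qed.

Lemma xrel_r1 m k : (1 <= m <= (2 * l)%N.-1)%N -> Rel xS r.+1 m k.
Proof.
move=> hm.
have hx1 : forall m k, xS r.+1 m k = xb r.+1 m k by move=> ? ?; apply: xS_low.
have hx0 : forall m k, xS r m k = xb r m k by move=> ? ?; apply: xS_low; lia.
have hx2 : forall m k, xS r.+2 m k = (-1) ^+ m * xb r m k.
  move=> ? ?; rewrite /xS (_ : (r.+2 <= r.+1)%N = false); last lia.
  rewrite (_ : (r.+2 <= 2 * r + 2)%N); last lia.
  by rewrite (_ : (2 * r + 2 - r.+2)%N = r) //; lia.
rewrite /Rel /= !hx1 hx0 hx2.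
have [m' [em|em]] := par m; rewrite em.
  have e1 : (2 * m')%N.-1 = (2 * m'.-1)%N.+1 by lia.
  rewrite e1 !xb_r1o !xb_r1e xb_re sgn_even.
  by ring.
have e1 : (2 * m')%N.+2 = (2 * m'.+1)%N by lia.
rewrite /= e1 !xb_r1o !xb_r1e xb_ro sgn_odd.
by ring.
Qed.

Lemma xS_Ssys : Ssys r l xS.
Proof.
have symS := xS_sym.
split; first by move=> m k; rewrite xS_low ?xb_lt ?T0 //; lia.
split.
  move=> m k; rewrite /xS (_ : (2 * r + 2 <= r.+1)%N = false); last lia.
  by rewrite leqnn subnn xb_lt ?T0 ?mulr1 //; lia.
split.
  move=> a k ha; case: (leqP a r.+1) => h.
    rewrite xS_low //; case: (ltnP a r) => h1; first by rewrite xb_lt // Ta0 //; lia.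
    case: (ltnP r a) => h2.
      have -> : a = r.+1 by lia.
      by rewrite (xb_r1e 0) Ta0 ?expr1n //; lia.
    have -> : a = r by lia.
    by rewrite (xb_re 0) !Ta0 ?mulr1 //; lia.
  rewrite symS; last lia.
  rewrite expr0 mul1r xS_low; last lia.
  case: (ltnP (2 * r + 2 - a)%N r) => h1; first by rewrite xb_lt // Ta0 //; lia.
  have -> : (2 * r + 2 - a)%N = r by lia.
  by rewrite (xb_re 0) !Ta0 ?mulr1 //; lia.
split.
  have hr_ : forall a k, (a <= r)%N -> xS a (2 * l)%N k = 1.
    move=> a k ha; rewrite xS_low; last lia.
    case: (ltnP a r) => h1.
      rewrite xb_lt //; case: (posnP a) => [->|a0]; first by rewrite T0.
      by rewrite Ta2l //; lia.
    have -> : a = r by lia.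
    by rewrite xb_re Tl_m1.
  move=> a k ha; case: (leqP a r) => h; first by apply: hr_.
  case: (leqP a r.+1) => h'.
    have -> : a = r.+1 by lia.
    by rewrite xS_low // xb_r1e Tl2.
  rewrite symS; last lia.
  by rewrite sgn_even mul1r hr_ //; lia.
split.
  move=> m k hm om; rewrite xS_low //.
  by rewrite /xb ltnNge leqnSn /= (_ : (r.+1 == r) = false) ?om //; lia.
split.
  have ulow : forall a m k, (a <= r.+1)%N -> Sgen r l a m -> xS a m k \is a GRing.unit.
    move=> a m k ha; rewrite /Sgen => /andP [/andP [h1 h2] h3].
    rewrite xS_low //; case: (ltnP a r) => h4.
      rewrite xb_lt //; apply: Tu; lia.
    have [m' [em|em]] := par m; rewrite em.
      case: (ltnP r a) => h5.
        have -> : a = r.+1 by lia.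
        rewrite xb_r1e; apply: unitrX; apply: Tr_unit; lia.
      have -> : a = r by lia.
      rewrite xb_re unitrM !Tr_unit //; lia.
    case: (ltnP r a) => h5.
      have ea : a = r.+1 by lia.
      by move: h3; rewrite ea em eqxx odd2S.
    have -> : a = r by lia.
    rewrite xb_ro unitrM !Tr_unit //; lia.
  move=> a m k hs; case: (leqP a r.+1) => h; first exact: ulow.
  move: (hs); rewrite /Sgen => /andP [/andP [h1 h2] h3].
  rewrite symS; last lia.
  rewrite unitrMr ?sgn_unit //; apply: ulow; first lia.
  rewrite /Sgen; apply/andP; split; first (apply/andP; split; lia).
  by rewrite (_ : ((2 * r + 2 - a)%N == r.+1) = false) //; lia.
split.
  move=> a m k ha hm; case: (leqP a r) => h; first by apply: xrel_low; lia.
  case: (leqP a r.+1) => h'.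
    have -> : a = r.+1 by lia.
    exact: xrel_r1.
  have -> : a = (2 * r + 2 - (2 * r + 2 - a)%N)%N by lia.
  apply: mirror; try lia; first by move=> b m0 k0 hb; apply: symS.
  apply: xrel_low; lia.
move=> a m k ha hm; apply: symS; lia.
Qed.
End TtoS.
Section StoT.
Variables (r l : nat) (R : comUnitRingType) (S : nat -> nat -> int -> R).
Hypothesis hr : (2 <= r)%N.
Hypothesis hl : (2 <= l)%N.
Hypothesis HS : Ssys r l S.

Lemma S0 m k : S 0 m k = 1. Proof. by case: HS. Qed.
Lemma Sa0 a k : (1 <= a <= (2 * r)%N.+1)%N -> S a 0 k = 1.
Proof. by case: HS => _ [_ [h _]]; apply: h. Qed.
Lemma Sa2l a k : (1 <= a <= (2 * r)%N.+1)%N -> S a (2 * l)%N k = 1.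
Proof. by case: HS => _ [_ [_ [h _]]]; apply: h. Qed.
Lemma Sodd0 m k : (1 <= m <= (2 * l)%N.-1)%N -> odd m -> S r.+1 m k = 0.
Proof. by case: HS => _ [_ [_ [_ [h _]]]]; apply: h. Qed.
Lemma Su a m k : Sgen r l a m -> S a m k \is a GRing.unit.
Proof. by case: HS => _ [_ [_ [_ [_ [h _]]]]]; apply: h. Qed.
Lemma Srel a m k : (1 <= a <= (2 * r)%N.+1)%N -> (1 <= m <= (2 * l)%N.-1)%N ->
     S a m (k - 1) * S a m (k + 1) = S a m.-1 k * S a m.+1 k + S a.-1 m k * S a.+1 m k.
Proof. by case: HS => _ [_ [_ [_ [_ [_ [h _]]]]]]; apply: h. Qed.
Lemma Ssym a m k : (1 <= a <= (2 * r)%N.+1)%N -> (1 <= m <= (2 * l)%N.-1)%N ->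
     S a m k = (-1) ^+ m * S (2 * r + 2 - a)%N m k.
Proof. by case: HS => _ [_ [_ [_ [_ [_ [_ h]]]]]]; apply: h. Qed.

Fixpoint P (m : nat) (k : int) : R :=
  match m with 0 => 1 | m'.+1 => S r (2 * m')%N.+1 k * (P m' k)^-1 end.

Lemma Sr_odd_unit m k : (m < l)%N -> S r (2 * m)%N.+1 k \is a GRing.unit.
Proof.
move=> hm; apply: Su; rewrite /Sgen; apply/andP; split; first (apply/andP; split; lia).
by rewrite (_ : (r == r.+1) = false) //; lia.
Qed.

Lemma P_unit m k : (m <= l)%N -> P m k \is a GRing.unit.
Proof.
elim: m => [|m IH] hm /=; first exact: unitr1.
rewrite unitrM Sr_odd_unit /= ?unitrV ?IH //; lia.
Qed.

Lemma S_odd m k : (m < l)%N -> S r (2 * m)%N.+1 k = P m.+1 k * P m k.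
Proof. by move=> hm /=; rewrite divrK // P_unit //; lia. Qed.

Lemma Psq m k : (m <= l)%N -> S r.+1 (2 * m)%N k = P m k ^+ 2.
Proof.
elim: m => [|m IH] hm; first by rewrite Sa0 ?expr1n //; lia.
have h := Srel r.+1 (2 * m)%N.+1 k ltac:(lia) ltac:(lia).
have z : forall j, S r.+1 (2 * m)%N.+1 j = 0 by move=> j; rewrite Sodd0 ?odd2S //; lia.
rewrite !z /= in h; try lia.
rewrite IH in h; last lia.
rewrite (Ssym r.+2) in h; try lia.
rewrite (_ : (2 * r + 2 - r.+2)%N = r) in h; last lia.
rewrite sgn_odd S_odd in h; last lia.
rewrite (_ : (2 * m)%N.+2 = (2 * m.+1)%N) in h; last lia.
apply: (mulrI (unitrX 2 (P_unit m k _))); first lia.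
apply: (lincomb (-1) h); ring.
Qed.

Lemma PA m k : (m <= l)%N -> S r (2 * m)%N k = P m (k - 1) * P m (k + 1).
Proof.
elim: m => [|m IH] hm; first by rewrite Sa0 ?mulr1 //; lia.
have h := Srel r (2 * m)%N.+1 k ltac:(lia) ltac:(lia).
have z : forall j, S r.+1 (2 * m)%N.+1 j = 0 by move=> j; rewrite Sodd0 ?odd2S //; lia.
rewrite z /= in h; try lia.
rewrite IH in h; last lia.
rewrite !S_odd in h; try lia.
rewrite (_ : (2 * m)%N.+2 = (2 * m.+1)%N) in h; last lia.
have u : P m (k - 1) * P m (k + 1) \is a GRing.unit by rewrite unitrM !P_unit //; lia.
apply: (mulrI u).
apply: (lincomb (-1) h); ring.
Qed.

Lemma Pl2 k : P l k ^+ 2 = 1.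
Proof. by rewrite -Psq // Sa2l //; lia. Qed.

Lemma Pper k : P l (k + 2) = P l k.
Proof.
have h := PA l (k + 1) (leqnn l).
rewrite Sa2l in h; last lia.
rewrite addrK (_ : k + 1 + 1 = k + 2) in h; last lia.
by rewrite -[P l (k + 2)]mul1r -(Pl2 k) expr2 -mulrA -h mulr1.
Qed.

Lemma Pev m k : (1 <= m <= l.-1)%N ->
  P m (k - 2) * P m (k + 2) = P m.-1 k * P m.+1 k + S r.-1 (2 * m)%N k.
Proof.
move=> hm.
have h := Srel r (2 * m)%N k ltac:(lia) ltac:(lia).
rewrite !PA in h; try lia.
have e1 : (2 * m)%N.-1 = (2 * m.-1)%N.+1 by lia.
rewrite e1 in h.
rewrite !S_odd in h; try lia.
rewrite Psq in h; last lia.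
rewrite prednK in h; last lia.
have ek1 : k - 1 - 1 = k - 2 by lia.
have ek2 : k + 1 + 1 = k + 2 by lia.
rewrite ek1 ek2 subrK addrK in h.
apply: (mulrI (unitrX 2 (P_unit m k _))); first lia.
apply: (lincomb 1 h); ring.
Qed.

Definition yT a m k : R := if (a < r)%N then S a m k else if a == r then P m k else 1.

Lemma yT_Tsys : Tsys r l yT.
Proof.
have ylt : forall a m k, (a < r)%N -> yT a m k = S a m k by move=> a m k h; rewrite /yT h.
have yr : forall m k, yT r m k = P m k by move=> m k; rewrite /yT ltnn eqxx.
split; first by move=> m k; rewrite ylt ?S0 //; lia.
split.
  move=> a k ha; case: (ltnP a r) => h; first by rewrite ylt ?Sa0 //; lia.
  by rewrite (_ : a = r) ?yr //; lia.
split; first by move=> a k ha; rewrite ylt ?Sa2l //; lia.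
split.
  move=> a m k ha hm; rewrite ylt; last lia.
  apply: Su; rewrite /Sgen; apply/andP; split; first (apply/andP; split; lia).
  by rewrite (_ : (a == r.+1) = false) //; lia.
split; first by move=> m k hm; rewrite yr P_unit //; lia.
split; first by move=> k; rewrite yr Pl2.
split; first by move=> k; rewrite !yr Pper.
split.
  move=> a m k ha hm; rewrite !ylt; try lia.
  by apply: Srel; lia.
have e1 : r.-1.-1 = (r - 2)%N by lia.
have e2 : r.-1.+1 = r by lia.
split.
  move=> m k hm; rewrite !yr !ylt; try lia.
  have h := Srel r.-1 (2 * m)%N k ltac:(lia) ltac:(lia).
  rewrite e1 e2 PA in h; last lia.
  by rewrite h mulrA.
split.
  move=> m k hm; rewrite !yr !ylt; try lia.
  have h := Srel r.-1 (2 * m)%N.+1 k ltac:(lia) ltac:(lia).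
  rewrite e1 e2 in h; rewrite S_odd in h; last lia.
  by rewrite h -mulrA [P m.+1 k * _]mulrC mulrA.
move=> m k hm; rewrite !yr ylt; last lia.
exact: Pev.
Qed.
End StoT.

Theorem proposition6p8 (r l : nat) (hr : (2 <= r)%N) (hl : (2 <= l)%N)
  (AS : comUnitRingType) (s : nat -> nat -> int -> AS)
  (AT : comUnitRingType) (t : nat -> nat -> int -> AT) :
  is_Sring r l s -> is_Tring r l t ->
  exists rho : {rmorphism AS -> AT},
    bijective rho /\
    (forall a m k, (1 <= a <= r.-1)%N -> (1 <= m <= (2 * l).-1)%N ->
       rho (s a m k) = t a m k) /\
    (forall m k, (1 <= m <= l.-1)%N ->
       rho (s r (2 * m)%N k) = t r m (k - 1) * t r m (k + 1)) /\
    (forall m k, (m <= l.-1)%N ->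
       rho (s r (2 * m).+1 k) = t r m k * t r m.+1 k) /\
    (forall m k, (1 <= m <= l.-1)%N ->
       rho (s r.+1 (2 * m)%N k) = t r m k ^+ 2) /\
    (forall a m k, (r + 2 <= a <= (2 * r).+1)%N -> (1 <= m <= (2 * l).-1)%N ->
       rho (s a m k) = (-1) ^+ m * rho (s (2 * r + 2 - a)%N m k)).
Proof.
move=> [HS Suniv] [HT Tuniv].
have [rho [rhoE _]] := Suniv AT (xS r _ t) (xS_Ssys r l _ t hr hl HT).
have [sig [sigE _]] := Tuniv AS (yT r _ s) (yT_Tsys r l _ s hr hl HS).
have sgen : forall a m, (1 <= a <= (2 * r).+1)%N -> (1 <= m <= (2 * l).-1)%N ->
    a != r.+1 \/ ~~ odd m -> Sgen r l a m.
  move=> a m ha hm ho; rewrite /Sgen; apply/andP; split; first by apply/andP; split.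
  by case: ho => h; apply/negP => /andP [h1 h2]; move: h; rewrite ?h1 ?h2.
have tgen1 : forall a m, (1 <= a <= r.-1)%N -> (1 <= m <= (2 * l).-1)%N -> Tgen r l a m.
  by move=> a m ha hm; rewrite /Tgen ha hm.
have tgenr : forall m, (1 <= m <= l)%N -> Tgen r l r m.
  by move=> m hm; rewrite /Tgen hm eqxx orbT.
have rho1 : forall a m k, (1 <= a <= r.-1)%N -> (1 <= m <= (2 * l).-1)%N ->
    rho (s a m k) = t a m k.
  move=> a m k ha hm; rewrite rhoE; last by apply: sgen; [lia|lia|left; lia].
  by rewrite xS_low ?xb_lt //; lia.
have rhoe : forall m k, (1 <= m <= l.-1)%N ->
    rho (s r (2 * m)%N k) = t r m (k - 1) * t r m (k + 1).
  move=> m k hm; rewrite rhoE; last by apply: sgen; [lia|lia|left; lia].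
  by rewrite xS_low ?xb_re //; lia.
have rhoo : forall m k, (m <= l.-1)%N -> rho (s r (2 * m).+1 k) = t r m k * t r m.+1 k.
  move=> m k hm; rewrite rhoE; last by apply: sgen; [lia|lia|left; lia].
  by rewrite xS_low ?xb_ro //; lia.
have rhor1 : forall m k, (1 <= m <= l.-1)%N -> rho (s r.+1 (2 * m)%N k) = t r m k ^+ 2.
  move=> m k hm; rewrite rhoE; last by apply: sgen; [lia|lia|right; rewrite odd2].
  by rewrite xS_low ?xb_r1e //; lia.
have rhosym : forall a m k, (r + 2 <= a <= (2 * r).+1)%N -> (1 <= m <= (2 * l).-1)%N ->
       rho (s a m k) = (-1) ^+ m * rho (s (2 * r + 2 - a)%N m k).
  move=> a m k ha hm; rewrite (Ssym r l _ s HS) ?rmorphMsign //; lia.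
have rhoP : forall m k, (m <= l)%N -> rho (P r _ s m k) = t r m k.
  elim=> [|m IH] k hm /=; first by rewrite rmorph1 (Ta0 r l _ t HT) //; lia.
  rewrite rmorphM rmorphV ?(P_unit r l _ s hr hl HS) ?IH ?rhoo; try lia.
  by rewrite mulrC mulKr ?(Tr_unit r l _ t hr hl HT) //; lia.
have sigP : forall m k, (m <= l)%N -> sig (t r m k) = P r _ s m k.
  move=> m k hm; case: (posnP m) => [->|m0]; first by rewrite (Ta0 r l _ t HT) ?rmorph1 //; lia.
  by rewrite sigE /yT ?ltnn ?eqxx //; apply: tgenr; lia.
have sig1 : forall a m k, (1 <= a <= r.-1)%N -> (1 <= m <= (2 * l).-1)%N ->
    sig (t a m k) = s a m k.
  by move=> a m k ha hm; rewrite sigE ?tgen1 // /yT (_ : (a < r)%N) //; lia.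
have c1 : cancel rho sig.
  have [f0 [_ U]] := Suniv AS s HS.
  have low : forall a m k, (a <= r.+1)%N -> Sgen r l a m -> sig (rho (s a m k)) = s a m k.
    move=> a m k ha; rewrite /Sgen => /andP [/andP [h1 h2] h3].
    case: (ltnP a r) => h4; first by rewrite rho1 ?sig1 //; lia.
    have [m' [em|em]] := par m; rewrite em.
      case: (ltnP r a) => h5.
        have -> : a = r.+1 by lia.
        rewrite rhor1 ?rmorphXn ?sigP ?(Psq r l _ s hr hl HS) //; lia.
      have -> : a = r by lia.
      rewrite rhoe ?rmorphM ?sigP ?(PA r l _ s hr hl HS) //; lia.
    case: (ltnP r a) => h5.
      have ea : a = r.+1 by lia.
      by move: h3; rewrite ea em eqxx odd2S.
    have -> : a = r by lia.
    rewrite rhoo; last lia.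
    rewrite rmorphM !sigP; try lia.
    by rewrite (S_odd r l _ s hr hl HS) ?[P r _ s m'.+1 k * _]mulrC //; lia.
  have gen : forall a m k, Sgen r l a m -> (sig \o rho) (s a m k) = s a m k.
    move=> a m k hs /=; case: (leqP a r.+1) => h; first exact: low.
    move: (hs); rewrite /Sgen => /andP [/andP [h1 h2] h3].
    rewrite (Ssym r l _ s HS) // !rmorphMsign low //; first lia.
    apply: sgen; [lia|lia|left; lia].
  have e1 := U (sig \o rho : {rmorphism AS -> AS}) gen.
  have e2 := U (idfun : {rmorphism AS -> AS}) (fun a m k _ => erefl).
  move=> z; have h1 := e1 z; have h2 := e2 z; rewrite /= in h1 h2.
  by rewrite h1 -h2.
have c2 : cancel sig rho.
  have [f0 [_ U]] := Tuniv AT t HT.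
  have gen : forall a m k, Tgen r l a m -> (rho \o sig) (t a m k) = t a m k.
    move=> a m k; rewrite /Tgen => /orP [/andP [ha hm] | /andP [/eqP -> hm]] /=.
      by rewrite sig1 ?rho1.
    by rewrite sigP ?rhoP //; lia.
  have e1 := U (rho \o sig : {rmorphism AT -> AT}) gen.
  have e2 := U (idfun : {rmorphism AT -> AT}) (fun a m k _ => erefl).
  move=> z; have h1 := e1 z; have h2 := e2 z; rewrite /= in h1 h2.
  by rewrite h1 -h2.
exists rho; split; first by exists sig.
by do 5 (split => //).
Qed.
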